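(* Let $D$ be a diagram of a knot $K$, let $E=\{e_1,\dots,e_n\}$ be a generating set of seeds for $D$ with $n=\omega(D)$ elements, and let $H$ be a Coxeter group with Coxeter rank $r(H)=n$. Let $\mathcal{A}\subseteq\mathrm{Gen}(H)$ be a robust set. Then the following are equivalent. (i) There is a surjective homomorphism $\pi_1(S^3\setminus K)\twoheadrightarrow H$ sending meridians to reflections, equivalently an $H$-coloring of $D$ by reflections whose labels generate $H$. (ii) There exist $R=\{\rho_1,\dots,\rho_n\}\in\mathcal{A}$ and a bijection $f:E\to R$ such that labeling each seed $e_i$ by $f(e_i)$ extends to an $H$-coloring of $D$.
   Context: A Coxeter group is given by generators $s$ with $s^2=1$ and relations $(st)^{k}=1$ prescribed by a labeled graph. A reflection is any conjugate of a generator. The Coxeter rank $r(H)$ is the minimal number of reflections generating $H$. In a knot diagram $D$, at a crossing with overstrand $o$ and understrands $u_1,u_2$, a coloring move adds $u_2$ to a set of colored strands that already contains $o$ and $u_1$. A generating set of seeds is a set of strands from which coloring moves eventually color every strand. The Wirtinger number $\omega(D)$ is the minimal size of a generating set of seeds. An $H$-coloring of $D$ by reflections assigns a reflection $g_s\in H$ to each strand $s$ such that $g_o g_{u_1} g_o^{-1}=g_{u_2}$ at every crossing. $\mathrm{Gen}(H)$ denotes the set of generating sets of $H$ consisting of exactly $r(H)$ reflections. Two members $\{r_i\},\{\rho_i\}$ are equivalent if $\{g^{-1}r_ig\}=\{\rho_i\}$ for some $g\in H$. A subset $\mathcal{A}\subseteq\mathrm{Gen}(H)$ is robust if it meets every equivalence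 class. *)

(* Defs.v *)
From mathcomp Require Import all_boot.
Set Implicit Arguments. Unset Strict Implicit. Unset Printing Implicit Defensive.

Record group := Group {
  gcar :> Type;
  gmul : gcar -> gcar -> gcar;
  gone : gcar;
  ginv : gcar -> gcar;
  gmulA : forall x y z, gmul x (gmul y z) = gmul (gmul x y) z;
  gmul1l : forall x, gmul gone x = x;
  gmul1r : forall x, gmul x gone = x;
  gmulVl : forall x, gmul (ginv x) x = gone;
  gmulVr : forall x, gmul x (ginv x) = gone
}.

Fixpoint gpow (G : group) (x : G) (k : nat) : G :=
  match k with 0 => gone G | k'.+1 => gmul x (gpow x k') end.

Definition is_hom (G K : group) (phi : G -> K) : Prop :=
  forall x y, phi (gmul x y) = gmul (phi x) (phi y).

Inductive gen_by (G : group) (X : G -> Prop) : G -> Prop :=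
  | gen_one : gen_by X (gone G)
  | gen_elt x : X x -> gen_by X x
  | gen_mul x y : gen_by X x -> gen_by X y -> gen_by X (gmul x y)
  | gen_inv x : gen_by X x -> gen_by X (ginv x).

Definition generates (G : group) (X : G -> Prop) : Prop :=
  forall h : G, gen_by X h.

(* m i j = 0 encodes m_ij = infinity (no relation).                   *)
Definition coxeter_matrix (I : finType) (m : I -> I -> nat) : Prop :=
  (forall i, m i i = 1) /\ (forall i j, m i j = m j i) /\
  (forall i j, i != j -> m i j != 1).

Definition coxeter_relations (G : group) (I : finType) (m : I -> I -> nat)
  (t : I -> G) : Prop :=
  forall i j, m i j != 0 -> gpow (gmul (t i) (t j)) (m i j) = gone G.

(* (H, s) is the group presented by generators s_i and relations
   (s_i s_j)^{m_ij} = 1 (in particular s_i^2 = 1 since m_ii = 1):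
   the s_i generate H, satisfy the relations, and H has the universal
   property of the presentation. *)
Definition coxeter_system (H : group) (I : finType) (m : I -> I -> nat)
  (s : I -> H) : Prop :=
  [/\ generates (fun h => exists i, h = s i),
      coxeter_relations m s &
      forall (G : group) (t : I -> G), coxeter_relations m t ->
        exists phi : H -> G, is_hom phi /\ forall i, phi (s i) = t i].

Definition reflection (H : group) (I : finType) (s : I -> H) (x : H) : Prop :=
  exists (g : H) (i : I), x = gmul (gmul (ginv g) (s i)) g.

Definition has_card (H : group) (R : H -> Prop) (k : nat) : Prop :=
  exists f : 'I_k -> H, injective f /\ forall h, R h <-> exists j, f j = h.

Definition coxeter_rank (H : group) (I : finType) (s : I -> H) (n : nat) : Prop :=
  (exists f : 'I_n -> H, (forall j, reflection s (f j)) /\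
      generates (fun h => exists j, h = f j)) /\
  (forall k (f : 'I_k -> H), (forall j, reflection s (f j)) ->
      generates (fun h => exists j, h = f j) -> n <= k).

Definition in_Gen (H : group) (I : finType) (s : I -> H) (n : nat)
  (R : H -> Prop) : Prop :=
  [/\ forall h, R h -> reflection s h, has_card R n & generates R].

Definition gen_equiv (H : group) (R R' : H -> Prop) : Prop :=
  exists g : H, forall h, R' h <-> exists r, R r /\ h = gmul (gmul (ginv g) r) g.

Definition robust (H : group) (I : finType) (s : I -> H) (n : nat)
  (A : (H -> Prop) -> Prop) : Prop :=
  (forall R, A R -> in_Gen s n R) /\
  (forall R, in_Gen s n R -> exists R', A R' /\ gen_equiv R R').

Record diagram := Diagram {
  strand : finType;
  crossing : finType;
  over : crossing -> strand;
  under1 : crossing -> strand;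
  under2 : crossing -> strand
}.

(* strands colored from the seeds E by repeated coloring moves; the two
   understrands of a crossing play symmetric roles. *)
Inductive colored (D : diagram) (E : {set strand D}) : strand D -> Prop :=
  | col_seed x : x \in E -> colored E x
  | col_move12 c : colored E (over c) -> colored E (under1 c) ->
                   colored E (under2 c)
  | col_move21 c : colored E (over c) -> colored E (under2 c) ->
                   colored E (under1 c).

Definition generating_seeds (D : diagram) (E : {set strand D}) : Prop :=
  forall x, colored E x.

Definition wirtinger_number (D : diagram) (w : nat) : Prop :=
  (exists E : {set strand D}, generating_seeds E /\ #|E| = w) /\
  (forall E : {set strand D}, generating_seeds E -> w <= #|E|).

Definition refl_coloring (D : diagram) (H : group) (I : finType) (s : I -> H)
  (g : strand D -> H) : Prop :=
  (forall x, reflection s (g x)) /\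
  (forall c, gmul (gmul (g (over c)) (g (under1 c))) (ginv (g (over c)))
             = g (under2 c)).

(* Main.v *)
Require Import Defs.
From mathcomp Require Import all_boot.
Set Implicit Arguments. Unset Strict Implicit.

Section G.
Variable H : group.
Implicit Types x y z : H.
Notation "x * y" := (gmul x y).
Notation "x ^-1" := (ginv x).

Lemma ginv_uniq x y : x * y = gone H -> y = x^-1.
Proof.
move=> e. by rewrite -[y]gmul1l -(gmulVl x) -gmulA e gmul1r.
Qed.

Lemma ginvK x : (x^-1)^-1 = x.
Proof. by symmetry; apply: ginv_uniq; rewrite gmulVl. Qed.

Lemma ginvM x y : (x * y)^-1 = y^-1 * x^-1.
Proof.
symmetry; apply: ginv_uniq.
by rewrite gmulA -(gmulA x) gmulVr gmul1r gmulVr.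
Qed.

Definition conj (k x : H) : H := k^-1 * x * k.

Lemma conjM k x y : conj k (x * y) = conj k x * conj k y.
Proof.
rewrite /conj -!gmulA; congr (_ * _); rewrite !gmulA.
by rewrite -(gmulA _ k) gmulVr gmul1r.
Qed.

Lemma conjV k x : conj k (x^-1) = (conj k x)^-1.
Proof. by rewrite /conj !ginvM ginvK gmulA. Qed.

Lemma conjK k x : k * conj k x * k^-1 = x.
Proof.
rewrite /conj -!gmulA gmulVr gmul1r !gmulA gmulVr gmul1l //.
Qed.

Lemma conj_inj k : injective (conj k).
Proof.
move=> x y e; by rewrite -(conjK k x) e conjK.
Qed.

Lemma gen_mono (X Y : H -> Prop) :
  (forall h, X h -> gen_by Y h) -> forall h, gen_by X h -> gen_by Y h.
Proof.
move=> XY h; elim=> [|x /XY //|x y _ ? _ ?|x _ ?]; by constructor.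
Qed.

End G.
Arguments conj {H}.

Lemma refl_conj (H : group) (I : finType) (s : I -> H) (k x : H) :
  reflection s x -> reflection s (conj k x).
Proof.
case=> a [i ->]; exists (gmul a k), i.
by rewrite /conj ginvM !gmulA.
Qed.

Lemma seeds_gen (D : diagram) (E : {set strand D}) (H : group) (g : strand D -> H) :
  (forall c, gmul (gmul (g (Defs.over c)) (g (under1 c))) (ginv (g (Defs.over c)))
             = g (under2 c)) ->
  forall x, colored E x -> gen_by (fun h => exists e, e \in E /\ h = g e) (g x).
Proof.
move=> Hc x; elim=> [y yE|c _ Ho _ Hu|c _ Ho _ Hu].
- by apply: gen_elt; exists y.
- rewrite -Hc; apply: gen_mul; [apply: gen_mul|apply: gen_inv]; done.
- have -> : g (under1 c) = gmul (gmul (ginv (g (Defs.over c))) (g (under2 c))) (g (Defs.over c)).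
    by rewrite -Hc !gmulA gmulVl gmul1l -gmulA gmulVl gmul1r.
  apply: gen_mul; [apply: gen_mul; [apply: gen_inv|]|]; done.
Qed.

Theorem lemma3p1 (D : diagram) (E : {set strand D}) (n : nat)
  (H : group) (I : finType) (m : I -> I -> nat) (s : I -> H)
  (A : (H -> Prop) -> Prop) :
  generating_seeds E -> #|E| = n -> wirtinger_number D n ->
  coxeter_matrix m -> coxeter_system m s -> coxeter_rank s n ->
  robust s n A ->
  (exists g : strand D -> H, refl_coloring s g /\
      generates (fun h => exists x, h = g x))
  <->
  (exists R : H -> Prop, A R /\
     exists f : strand D -> H,
       [/\ forall e, e \in E -> R (f e),
           {in E &, injective f},
           forall h, R h -> exists2 e, e \in E & f e = h &
           exists g : strand D -> H, refl_coloring s g /\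
             forall e, e \in E -> g e = f e]).
Proof.
move=> HE En _ _ _ [_ Rmin] [AG Arob]; subst n.
split.
- case=> g [[Hr Hc] Hgen].
  have Egen : generates (fun h => exists e, e \in E /\ h = g e).
    move=> h; apply: (gen_mono _ (Hgen h)) => _ [x ->].
    exact: seeds_gen.
  have bound : forall S : {set strand D},
      (forall e, e \in E -> exists2 e', e' \in S & g e = g e') -> #|E| <= #|S|.
    move=> S cov; apply: (Rmin _ (fun j => g (enum_val j))) => [j|h]; first exact: Hr.
    apply: (gen_mono _ (Egen h)) => _ [e [eE ->]].
    case: (cov e eE) => e' e'S ->; apply: gen_elt.
    by exists (enum_rank_in e'S e'); rewrite enum_rankK_in.
  have ginj : {in E &, injective g}.
    move=> x y xE yE gxy; case: (eqVneq x y) => // nxy.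
    have := bound (E :\ y); rewrite (cardsD1 y E) yE.
    have : #|E :\ y| < (true + #|E :\ y|) by [].
    move=> lt le; exfalso.
    suff hh : true + #|E :\ y| <= #|E :\ y| by move: (leq_trans hh lt); rewrite ltnn.
    apply: le => e eE; case: (eqVneq e y) => [->|ney].
    + by exists x; [rewrite !inE nxy xE|].
    + by exists e; [rewrite !inE ney|].
  set R0 := fun h => exists e, e \in E /\ h = g e.
  have R0G : in_Gen s #|E| R0.
    split => //; first by move=> _ [e [_ ->]].
    exists (fun j => g (enum_val j)); split.
      by move=> i j /(ginj _ _ (enum_valP i) (enum_valP j)) /enum_val_inj.
    move=> h; split => [[e [eE ->]]|[j <-]].
      by exists (enum_rank_in eE e); rewrite enum_rankK_in.
    by exists (enum_val j); split => //; exact: enum_valP.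
  case: (Arob _ R0G) => R' [AR' [k Hk]].
  exists R'; split => //; exists (fun x => conj k (g x)); split.
  + by move=> e eE; apply/Hk; exists (g e); split => //; exists e.
  + by move=> x y xE yE /conj_inj /ginj; apply.
  + by move=> h /Hk [_ [[e [eE ->]] ->]]; exists e.
  + exists (fun x => conj k (g x)); split => //; split.
      by move=> x; apply: refl_conj.
    by move=> c; rewrite -conjV -!conjM Hc.
- case=> R [AR [f [fR finj fsurj [g [Hcol gf]]]]].
  exists g; split => // h.
  case: (AG _ AR) => _ _ Rgen.
  apply: (gen_mono _ (Rgen h)) => h' /fsurj [e eE <-].
  by apply: gen_elt; exists e; rewrite gf.
Qed.
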